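(* Every dappled patch $G$ has a homomorphism (of dappled graphs) to the dappled triangular grid $\mathbf{T}$.
   Context: A patch is a connected plane graph all of whose faces, except possibly the outer face, have length three. A hued graph is a graph $G$ with a proper coloring $\psi_G:V(G)\to\mathbb{Z}_3$ (hue); a dappled graph is a hued graph $G$ with additionally a proper coloring $\varphi_G:V(G)\to\mathbb{Z}_2^2$ (color). A dappled patch is a patch that is a dappled graph. A homomorphism of dappled graphs $f:V(G)\to V(H)$ maps adjacent vertices to adjacent vertices and preserves both hue and color. The dappled triangular grid $\mathbf{T}$ has vertex set $\mathbb{Z}^2$, with $(i_1,j_1)$ and $(i_2,j_2)$ adjacent iff $(i_2-i_1,j_2-j_1)\in\{\pm(1,0),\pm(0,1),\pm(1,1)\}$, hue $(i+j)\bmod 3$ and color $(i\bmod 2,j\bmod 2)$ at vertex $(i,j)$. *)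

(* Defs.v *)
From mathcomp Require Import all_boot all_order all_algebra.
Set Implicit Arguments. Unset Strict Implicit. Unset Printing Implicit Defensive.
Import GRing.Theory Num.Theory.
Local Open Scope ring_scope.

(* A plane graph is presented combinatorially as a planar (genus 0) rotation
   system / combinatorial map: vertices V, darts D (two per edge), [tail d]
   the vertex a dart leaves from, [rev] the fixed-point-free involution
   pairing the two darts of an edge, [rot] the cyclic order of darts around
   each vertex.  Faces are the orbits of [face_next := rot \o rev]; the length
   of a face is the length of its boundary walk (the orbit size). *)
Section PlaneGraph.
Variables (V D : finType) (tail : D -> V) (rev rot : D -> D).

Definition adj : rel V :=
  fun u v => [exists d, (tail d == u) && (tail (rev d) == v)].

Definition face_next (d : D) : D := rot (rev d).

Definition is_rotation_system : Prop :=
  [/\ (forall d, rev (rev d) = d), (forall d, rev d != d),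
      injective rot, (forall d, tail (rot d) = tail d)
    & (forall d e, tail d = tail e -> fconnect rot d e)].

Definition is_simple : Prop :=
  (forall d, tail (rev d) != tail d) /\
  (forall d e, tail d = tail e -> tail (rev d) = tail (rev e) -> d = e).

Definition is_connected : Prop := forall u v, connect adj u v.

Definition nfaces : nat := fcard face_next (@predT D).

(* Euler's formula characterises genus 0 for connected maps. *)
Definition is_spherical : Prop :=
  (0 < #|D|)%N -> (#|V| + nfaces = (#|D| %/ 2) + 2)%N.

Definition is_plane_graph : Prop :=
  [/\ is_rotation_system, is_simple & is_spherical].

(* A patch: connected plane graph all of whose faces, except possibly one
   (the outer face), have length three. *)
Definition is_patch : Prop :=
  [/\ is_plane_graph, is_connected &
      forall d1 d2, order face_next d1 != 3%N -> order face_next d2 != 3%N ->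
        fconnect face_next d1 d2].

Definition proper_coloring (C : Type) (c : V -> C) : Prop :=
  forall u v, adj u v -> c u <> c v.
End PlaneGraph.

Definition adjT (p q : int * int) : Prop :=
  let di := q.1 - p.1 in let dj := q.2 - p.2 in
  (di, dj) \in [:: (1, 0); (-1, 0); (0, 1); (0, -1); (1, 1); (-1, -1)].

Definition hueT (p : int * int) : 'Z_3 := (p.1 + p.2)%:~R.
Definition colorT (p : int * int) : 'Z_2 * 'Z_2 := (p.1%:~R, p.2%:~R).

(* Main.v *)
Require Import Defs.
From mathcomp Require Import all_boot all_order all_algebra.
From HB Require Import structures.
From mathcomp Require Import zify ring lra.
Set Implicit Arguments. Unset Strict Implicit. Unset Printing Implicit Defensive.
Import GRing.Theory Num.Theory.
Local Open Scope ring_scope.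
Section Orb.
Variables (D : finType) (f : D -> D).
Hypothesis finj : injective f.
Notation Y := {ffun D -> rat^o}.

Let symf : connect_sym (coerced_frel f) := fconnect_sym finj.
Definition RT := {x : D | froots f x}.
Definition rootR (x : D) : RT := exist _ (froot f x) (roots_root symf x).

Definition Lf (c : {ffun RT -> rat^o}) : Y := [ffun x => c (rootR x)].
Lemma Lf_lin : linear Lf.
Proof. by move=> a u v; apply/ffunP => x; rewrite !ffunE. Qed.
HB.instance Definition _ := GRing.isLinear.Build _ _ _ _ Lf Lf_lin.

Lemma dim_orbit_funs (W : {vspace Y}) :
  (forall h : Y, (forall x, h (f x) = h x) -> h \in W) -> (fcard f predT <= \dim W)%N.
Proof.
move=> HW.
have sub : (limg (linfun Lf) <= W)%VS.
  apply/subvP => h /memv_imgP [c _ ->]; apply: HW => x.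
  rewrite !lfunE /= !ffunE; congr (c _); apply: val_inj => /=.
  by have /(fingraph.rootP symf) -> := fconnect1 f x.
apply: leq_trans (dimvS sub).
rewrite limg_dim_eq; last first.
  apply/eqP; rewrite -subv0; apply/subvP => c /memv_capP [_].
  rewrite memv_ker => /eqP Hc; rewrite memv0; apply/eqP/ffunP => r.
  have := congr1 (fun h : Y => h (val r)) Hc.
  rewrite lfunE /= !ffunE => <-; congr (c _); apply: val_inj => /=.
  by case: r => x /= /eqP.
rewrite dimvf /dim /= muln1 card_sig.
by apply: eq_leq; apply: eq_card => x; rewrite !inE andbT.
Qed.
End Orb.

Lemma sum_ind (D : finType) (P : pred D) (a : D) :
  \sum_(y | P y) ((y == a)%:R : rat^o) = (P a)%:R.
Proof.
rewrite big_mkcond (bigD1 a) //= eqxx big1 ?addr0; first by case: (P a).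
by move=> y /negbTE ->; case: (P y).
Qed.

Section Core.
Variables (V D : finType) (tail : D -> V) (rev rot : D -> D).
Hypotheses (revK : forall d, rev (rev d) = d) (revP : forall d, rev d != d)
  (rotI : injective rot) (tail_rot : forall d, tail (rot d) = tail d)
  (rot_tr : forall d e, tail d = tail e -> fconnect rot d e)
  (conn : forall u v, connect (adj tail rev) u v)
  (x0 : D)
  (euler : (#|V| + nfaces rev rot = #|D| %/ 2 + 2)%N).

Notation Y := {ffun D -> rat^o}.
Notation X := {ffun V -> rat^o}.
Notation fn := (face_next rev rot).

Lemma revI : injective rev. Proof. exact: (can_inj revK). Qed.
Lemma fnI : injective fn.
Proof. by move=> a b; rewrite /face_next => /rotI /revI. Qed.

Definition nu (h : Y) : Y := [ffun d => h d - h (rev d)].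
Lemma nu_lin : linear nu.
Proof. by move=> a u v; apply/ffunP => x; rewrite !ffunE /=; ring. Qed.
HB.instance Definition _ := GRing.isLinear.Build _ _ _ _ nu nu_lin.

Definition d1 (h : Y) : Y :=
  [ffun x => \sum_(y | fconnect fn x y) (h y - h (rev y))].
Lemma d1_lin : linear d1.
Proof.
move=> a u v; apply/ffunP => x; rewrite !ffunE /= scaler_sumr -big_split /=.
by apply: eq_bigr => y _; rewrite !ffunE /=; ring.
Qed.
HB.instance Definition _ := GRing.isLinear.Build _ _ _ _ d1 d1_lin.

Definition cob (p : X) : Y := [ffun d => p (tail (rev d)) - p (tail d)].
Lemma cob_lin : linear cob.
Proof. by move=> a u v; apply/ffunP => x; rewrite !ffunE /=; ring. Qed.
HB.instance Definition _ := GRing.isLinear.Build _ _ _ _ cob cob_lin.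

Definition K := lker (linfun d1).

Lemma adj_sym : symmetric (adj tail rev).
Proof.
move=> u v; apply/existsP/existsP => [] [d /andP [/eqP h1 /eqP h2]];
  by exists (rev d); rewrite revK h1 h2 !eqxx.
Qed.
Let csym : connect_sym (adj tail rev) := sym_connect_sym adj_sym.

Lemma cob_sub : (limg (linfun cob) <= (linfun nu) @: K)%VS.
Proof.
apply/subvP => h /memv_imgP [p _ ->].
pose q : Y := [ffun d => - p (tail d)].
have -> : linfun cob p = linfun nu q.
  by rewrite !lfunE /=; apply/ffunP => d; rewrite !ffunE /=; ring.
apply: memv_img; rewrite /K memv_ker lfunE /=; apply/eqP/ffunP => x.
rewrite !ffunE /=.
have -> : \sum_(y | fconnect fn x y) (q y - q (rev y))
   = \sum_(y | fconnect fn x y) p (tail (fn y)) - \sum_(y | fconnect fn x y) p (tail y).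
  rewrite -sumrB; apply: eq_bigr => y _; rewrite !ffunE /face_next tail_rot; ring.
rewrite [X in _ - X](reindex_inj fnI) /=.
under [X in _ - X]eq_bigl => y do rewrite -(same_fconnect1_r fnI).
by rewrite subrr.
Qed.

Lemma ker_nu_dim : (fcard rev predT <= \dim (lker (linfun nu)))%N.
Proof.
apply: (@dim_orbit_funs _ rev revI) => h Hh; rewrite memv_ker lfunE /=.
by apply/eqP/ffunP => d; rewrite !ffunE /= Hh subrr.
Qed.

Definition Ind (a : D) : Y := [ffun x => (fconnect fn x a)%:R].
Definition Rel (a b : D) := Ind a - Ind b \in limg (linfun d1).

Lemma Rel_refl a : Rel a a. Proof. by rewrite /Rel subrr mem0v. Qed.
Lemma Rel_sym a b : Rel a b -> Rel b a.
Proof. by rewrite /Rel -opprB memvN. Qed.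
Lemma Rel_trans a b c : Rel a b -> Rel b c -> Rel a c.
Proof.
rewrite /Rel => H1 H2; have := memvD H1 H2.
by rewrite addrA subrK.
Qed.
Lemma Ind_fn a : Ind (fn a) = Ind a.
Proof. by apply/ffunP => x; rewrite !ffunE -(same_fconnect1_r fnI). Qed.
Lemma Rel_rev a : Rel a (rev a).
Proof.
rewrite /Rel.
pose e : Y := [ffun y => (y == a)%:R].
have -> : Ind a - Ind (rev a) = linfun d1 e.
  apply/ffunP => x; rewrite lfunE /= !ffunE.
  under eq_bigr => y _ do rewrite !ffunE (canF_eq revK).
  by rewrite sumrB !sum_ind.
exact: memv_img (memvf _).
Qed.
Lemma Rel_rot a : Rel a (rot a).
Proof.
have -> : rot a = fn (rev a) by rewrite /face_next revK.
rewrite /Rel Ind_fn; exact: Rel_rev.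
Qed.
Lemma Rel_vert a b : tail a = tail b -> Rel a b.
Proof.
move=> /rot_tr Hc.
have cl : closed (coerced_frel rot) [pred y | Rel a y].
  move=> x y /eqP <-; rewrite !inE; apply/idP/idP => H.
    exact: Rel_trans H (Rel_rot x).
  exact: Rel_trans H (Rel_sym (Rel_rot x)).
have := closed_connect cl Hc.
by rewrite !inE Rel_refl => <-.
Qed.
Lemma Rel_all a b : Rel a b.
Proof.
pose P := [pred w | [forall x, (tail x == w) ==> Rel a x]].
have step u w : adj tail rev u w -> u \in P -> w \in P.
  case/existsP => d /andP [/eqP du /eqP dw] /forallP Pu.
  apply/forallP => x; apply/implyP => /eqP xw.
  have := Pu d; rewrite du eqxx /= => Rd.
  apply: Rel_trans (Rel_trans Rd (Rel_rev d)) (Rel_vert _).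
  by rewrite xw dw.
have cl : closed (adj tail rev) P.
  move=> u w H; apply/idP/idP; first exact: step.
  by apply: step; rewrite adj_sym.
have := closed_connect cl (conn (tail a) (tail b)).
have -> : tail a \in P.
  by apply/forallP => x; apply/implyP => /eqP xa; apply: Rel_vert.
by move/esym/forallP/(_ b); rewrite eqxx.
Qed.

Lemma img_d1_dim : (fcard fn predT <= \dim (limg (linfun d1)) + 1)%N.
Proof.
pose W := (limg (linfun d1) + <[Ind x0]>)%VS.
apply: leq_trans (_ : \dim W <= _)%N; last first.
  apply: leq_trans (dimv_add_leqif _ _).1 _.
  by rewrite leq_add2l dim_vline leq_b1.
apply: (@dim_orbit_funs _ fn fnI) => h Hh.
have Hinv : invariant fn h =1 xpredT by move=> y; rewrite /invariant /= Hh eqxx.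
have -> : h = \sum_(r : RT fn) h (val r) *: Ind (val r).
  apply/ffunP => x; rewrite sum_ffunE (bigD1 (rootR fnI x)) //= big1 ?addr0.
    rewrite !ffunE connect_root /= [_ *: _]mulr1.
    exact: (fconnect_invariant Hinv (connect_root _ x)).
  move=> r /eqP Hr; rewrite !ffunE.
  case Hc : (fconnect fn x (val r)); last by rewrite /= [_ *: _]mulr0.
  exfalso; apply: Hr; apply: val_inj => /=.
  rewrite (elimT (fingraph.rootP (fconnect_sym fnI)) Hc).
  by case: r {Hc} => y /= /eqP.
apply: memv_suml => r _; apply: memvZ.
rewrite -(subrK (Ind x0) (Ind (val r))); apply: memv_add; first exact: Rel_all.
exact: memv_line.
Qed.

Lemma ker_cob_dim : (\dim (lker (linfun cob)) <= 1)%N.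
Proof.
apply: leq_trans (dimvS (_ : lker _ <= <[ [ffun=> 1] : X ]>)%VS) _; last first.
  by rewrite dim_vline leq_b1.
apply/subvP => p; rewrite memv_ker lfunE /= => /eqP Hp.
have Hc v : p v = p (tail x0).
  pose P := [pred w | p w == p (tail x0)].
  have cl : closed (adj tail rev) P.
    move=> u w /existsP [d /andP [/eqP du /eqP dw]].
    have := congr1 (fun k : Y => k d) Hp; rewrite !ffunE du dw => /subr0_eq.
    by rewrite !inE => ->.
  have := closed_connect cl (conn (tail x0) v).
  by rewrite !inE eqxx => /esym /eqP.
by apply/vlineP; exists (p (tail x0)); apply/ffunP => v; rewrite !ffunE Hc [_ *: _]mulr1.
Qed.

Lemma card_rev : (fcard rev predT * 2 = #|D|)%N.
Proof.
have -> : #|D| = #|predT : pred D| by [].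
apply: fcard_order_set; last by move=> x y _.
- exact: revI.
apply/subsetP => x _; rewrite inE.
rewrite (@order_cycle _ rev [:: x; rev x]) //.
- by rewrite /= revK !eqxx.
- by rewrite /= inE andbT eq_sym revP.
- exact: mem_head.
Qed.

Lemma core (g : D -> rat) : (forall d, g (rev d) = - g d) ->
  (forall x, \sum_(y | fconnect fn x y) g y = 0) ->
  exists p : V -> rat, forall d, g d = p (tail (rev d)) - p (tail d).
Proof.
move=> ganti gclosed.
have subK : (lker (linfun nu) <= K)%VS.
  apply/subvP => h; rewrite !memv_ker !lfunE /= => /eqP Hh.
  apply/eqP/ffunP => x; rewrite !ffunE; apply: big1 => y _.
  by have := congr1 (fun k : Y => k y) Hh; rewrite !ffunE.
have eqd : (linfun nu @: K)%VS = limg (linfun cob).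
  apply/eqP; rewrite eq_sym eqEdim cob_sub /=.
  have h1 := limg_ker_dim (linfun nu) K.
  rewrite (capv_idPr subK) in h1.
  have h2 := limg_ker_dim (linfun d1) fullv.
  rewrite capfv dimvf /dim /= muln1 -/K in h2.
  have h3 := limg_ker_dim (linfun cob) fullv.
  rewrite capfv dimvf /dim /= muln1 in h3.
  have h4 := ker_nu_dim. have h5 := img_d1_dim. have h6 := ker_cob_dim.
  have h7 := card_rev. have e := euler. rewrite /nfaces in e.
  have h2' : (\dim K + \dim (limg (linfun d1)) = #|D|)%N := h2.
  have h3' : (\dim (lker (linfun cob)) + \dim (limg (linfun cob)) = #|V|)%N := h3.
  have h7' : (fcard rev predT * 2 = #|D|)%N := h7.
  have e' : (#|V| + fcard fn predT = #|D| %/ 2 + 2)%N := e.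
  clear h2 h3 h7 e. lia.
pose h : Y := [ffun d => g d / 2].
have hg y : h y - h (rev y) = g y by rewrite !ffunE ganti; field.
have : ([ffun d => g d] : Y) \in (linfun nu @: K)%VS.
  have -> : [ffun d => g d] = linfun nu h.
    by apply/ffunP => d; rewrite lfunE /= [LHS]ffunE -hg [RHS]ffunE.
  apply: memv_img; rewrite memv_ker lfunE; apply/eqP/ffunP => x; rewrite !ffunE.
  under eq_bigr => y _ do rewrite hg.
  exact: gclosed.
rewrite eqd => /memv_imgP [p _ Hp]; exists (fun v => p v) => d.
by have := congr1 (fun k : Y => k d) Hp; rewrite !ffunE lfunE /= ffunE.
Qed.
End Core.
Section Faces.
Variables (D : finType) (rev rot : D -> D).
Hypotheses (revK : forall d, rev (rev d) = d) (rotI : injective rot).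
Notation fn := (face_next rev rot).
Let revI : injective rev. Proof. exact: (can_inj revK). Qed.
Let fnI : injective fn.
Proof. by move=> a b; rewrite /face_next => /rotI /revI. Qed.
Let symf : connect_sym (coerced_frel fn) := fconnect_sym fnI.

Lemma tri_sum (g : D -> rat) x : (order fn x = 3)%N ->
  \sum_(y | fconnect fn x y) g y = g x + g (fn x) + g (fn (fn x)).
Proof.
move=> H3.
rewrite (eq_bigl (fun y => y \in orbit fn x)); last by move=> y; rewrite fconnect_orbit.
rewrite -big_uniq ?orbit_uniq // /orbit H3 /= !big_cons big_nil addr0 addrA.
by [].
Qed.

Lemma all_faces (g : D -> rat) : (forall d, g (rev d) = - g d) ->
   (forall x, (order fn x = 3)%N -> g x + g (fn x) + g (fn (fn x)) = 0) ->
   (forall d1 d2, (order fn d1 != 3)%N -> (order fn d2 != 3)%N -> fconnect fn d1 d2) ->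
   forall x, \sum_(y | fconnect fn x y) g y = 0.
Proof.
move=> ganti gtri outer x.
have [H3|H3] := eqVneq (order fn x) 3; first by rewrite tri_sum // gtri.
have tot : \sum_y g y = 0.
  have H : \sum_y g y = - \sum_y g y.
    rewrite {1}(reindex_inj revI) /= -sumrN; apply: eq_bigr => y _; exact: ganti.
  have : (\sum_y g y) *+ 2 = 0 by rewrite mulr2n {1}H addNr.
  by move/eqP; rewrite mulrn_eq0 /= => /eqP.
transitivity (\sum_y g y); last exact: tot.
rewrite [RHS](bigID (fconnect fn x)) /=.
suff -> : \sum_(y | ~~ fconnect fn x y) g y = 0 by rewrite addr0.
rewrite (partition_big (froot fn) (fun r => froots fn r && ~~ fconnect fn x r)) /=.
  apply: big1 => r /andP [rr nxr].
  rewrite (eq_bigl (fconnect fn r)).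
    have Hr3 : (order fn r = 3)%N.
      case: (eqVneq (order fn r) 3%N) => // Hr.
      by rewrite (outer _ _ H3 Hr) in nxr.
    by rewrite tri_sum // gtri.
  move=> y /=; rewrite -{1}(eqP rr) (fingraph.root_connect symf) (symf y r).
  apply: andb_idl => ry; apply: contra nxr => xy.
  by apply: connect_trans xy _; rewrite symf.
move=> y ny; rewrite (fingraph.roots_root symf) /=.
apply: contra ny => xr.
apply: connect_trans xr _; rewrite symf; exact: fingraph.connect_root.
Qed.
End Faces.

Definition sgn (h1 h2 : 'Z_3) : int := if h2 - h1 == 1 then 1 else -1.
Definition Dl (h1 h2 : 'Z_3) (c1 c2 : 'Z_2 * 'Z_2) : int * int :=
  let s := sgn h1 h2 in
  let d := (c2.1 - c1.1, c2.2 - c1.2) in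
  if d == (1, 0) then (s, 0) else if d == (0, 1) then (0, s) else (-s, -s).
Definition crt (h : 'Z_3) (c : 'Z_2 * 'Z_2) : int * int :=
  let c1 : int := nat_of_ord c.1 in let c2 : int := nat_of_ord c.2 in
  let k : 'Z_3 := 2 * (h - c1%:~R - c2%:~R) in (c1 + 2 * (nat_of_ord k)%:Z, c2).

Definition Z3s : seq 'Z_3 := [:: 0; 1; 2].
Definition Cs : seq ('Z_2 * 'Z_2) := [:: (0,0); (0,1); (1,0); (1,1)].
Lemma memZ3 (h : 'Z_3) : h \in Z3s. Proof. by case: h => [[|[|[|?]]] ?]. Qed.
Lemma memC (c : 'Z_2 * 'Z_2) : c \in Cs.
Proof. by case: c => [[[|[|?]] ?] [[|[|?]] ?]]. Qed.

Definition chk0 := all (fun h => all (fun c =>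
   (hueT (crt h c) == h) && (colorT (crt h c) == c)) Cs) Z3s.
Lemma chk0_ok : chk0. Proof. by vm_compute. Qed.

Definition chk1 := all (fun h1 => all (fun h2 => all (fun c1 => all (fun c2 =>
  (h1 != h2) ==> (c1 != c2) ==>
   [&& Dl h2 h1 c2 c1 == (- (Dl h1 h2 c1 c2).1, - (Dl h1 h2 c1 c2).2),
       ((Dl h1 h2 c1 c2).1 - 0, (Dl h1 h2 c1 c2).2 - 0) \in
          [:: (1, 0); (-1, 0); (0, 1); (0, -1); (1, 1); (-1, -1)],
       (((Dl h1 h2 c1 c2).1 + (Dl h1 h2 c1 c2).2)%:~R == h2 - h1 :> 'Z_3),
       (((Dl h1 h2 c1 c2).1)%:~R == c2.1 - c1.1 :> 'Z_2) &
       (((Dl h1 h2 c1 c2).2)%:~R == c2.2 - c1.2 :> 'Z_2)]) Cs) Cs) Z3s) Z3s.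
Lemma chk1_ok : chk1. Proof. by vm_compute. Qed.

Definition chk2 := all (fun h0 => all (fun h1 => all (fun h2 =>
  all (fun c0 => all (fun c1 => all (fun c2 =>
  [&& h0 != h1, h1 != h2, h2 != h0, c0 != c1, c1 != c2 & c2 != c0] ==>
  ((Dl h0 h1 c0 c1).1 + (Dl h1 h2 c1 c2).1 + (Dl h2 h0 c2 c0).1 == 0) &&
  ((Dl h0 h1 c0 c1).2 + (Dl h1 h2 c1 c2).2 + (Dl h2 h0 c2 c0).2 == 0))
  Cs) Cs) Cs) Z3s) Z3s) Z3s.
Lemma chk2_ok : chk2. Proof. by vm_compute. Qed.

Lemma crt_spec h c : hueT (crt h c) = h /\ colorT (crt h c) = c.
Proof.
have := chk0_ok; move/allP/(_ h (memZ3 h))/allP/(_ c (memC c))/andP.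
by case=> /eqP -> /eqP ->.
Qed.

Lemma Dl_prop h1 h2 c1 c2 : h1 != h2 -> c1 != c2 ->
  [/\ Dl h2 h1 c2 c1 = (- (Dl h1 h2 c1 c2).1, - (Dl h1 h2 c1 c2).2),
       ((Dl h1 h2 c1 c2).1 - 0, (Dl h1 h2 c1 c2).2 - 0) \in
          [:: (1, 0); (-1, 0); (0, 1); (0, -1); (1, 1); (-1, -1)],
       (((Dl h1 h2 c1 c2).1 + (Dl h1 h2 c1 c2).2)%:~R = h2 - h1 :> 'Z_3),
       (((Dl h1 h2 c1 c2).1)%:~R = c2.1 - c1.1 :> 'Z_2) &
       (((Dl h1 h2 c1 c2).2)%:~R = c2.2 - c1.2 :> 'Z_2)].
Proof.
move=> H1 H2; have := chk1_ok.
move/allP/(_ h1 (memZ3 h1))/allP/(_ h2 (memZ3 h2))/allP/(_ c1 (memC c1)).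
move/allP/(_ c2 (memC c2)); rewrite H1 H2 /=.
by case/and5P => /eqP -> -> /eqP -> /eqP -> /eqP ->.
Qed.

Lemma Dl_tri h0 h1 h2 c0 c1 c2 :
  h0 != h1 -> h1 != h2 -> h2 != h0 -> c0 != c1 -> c1 != c2 -> c2 != c0 ->
  ((Dl h0 h1 c0 c1).1 + (Dl h1 h2 c1 c2).1 + (Dl h2 h0 c2 c0).1 = 0) /\
  ((Dl h0 h1 c0 c1).2 + (Dl h1 h2 c1 c2).2 + (Dl h2 h0 c2 c0).2 = 0).
Proof.
move=> H1 H2 H3 H4 H5 H6; have := chk2_ok.
move/allP/(_ h0 (memZ3 h0))/allP/(_ h1 (memZ3 h1))/allP/(_ h2 (memZ3 h2)).
move/allP/(_ c0 (memC c0))/allP/(_ c1 (memC c1))/allP/(_ c2 (memC c2)).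
by rewrite H1 H2 H3 H4 H5 H6 /= => /andP [/eqP -> /eqP ->].
Qed.

Lemma shift_eq (R : zmodType) (x a b : R) : (x + (b - a) == b) = (x == a).
Proof.
apply/eqP/eqP => [H | ->]; last by rewrite addrC subrK.
by rewrite -(addrK (b - a) x) H opprB addrC subrK.
Qed.

Theorem theorem7 (V D : finType) (tail : D -> V) (rev rot : D -> D)
    (hue : V -> 'Z_3) (color : V -> 'Z_2 * 'Z_2) :
  is_patch tail rev rot ->
  proper_coloring tail rev hue ->
  proper_coloring tail rev color ->
  exists f : V -> int * int,
    [/\ forall u v, adj tail rev u v -> adjT (f u) (f v),
        forall v, hue v = hueT (f v)
      & forall v, color v = colorT (f v)].
Proof.
move=> [[[revK revP rotI tail_rot rot_tr] simple sph] conn outer] phue pcol.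
case: (pickP (@predT D)) => [x0 _ | D0]; last first.
  exists (fun v => crt (hue v) (color v)); split.
  - by move=> u v /existsP [d _]; have := D0 d.
  - by move=> v; case: (crt_spec (hue v) (color v)).
  - by move=> v; case: (crt_spec (hue v) (color v)).
have euler := sph (ltac:(by apply/card_gt0P; exists x0)).
have adjd d : adj tail rev (tail d) (tail (rev d)).
  by apply/existsP; exists d; rewrite !eqxx.
have hne d : hue (tail d) != hue (tail (rev d)) by apply/eqP; apply: phue.
have cne d : color (tail d) != color (tail (rev d)) by apply/eqP; apply: pcol.
pose dl d := Dl (hue (tail d)) (hue (tail (rev d))) (color (tail d)) (color (tail (rev d))).
have dlrev d : dl (rev d) = (- (dl d).1, - (dl d).2).
  by rewrite /dl revK; case: (Dl_prop (hne d) (cne d)).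
have revI : injective rev by exact: (can_inj revK).
have fnI : injective (face_next rev rot).
  by move=> a b; rewrite /face_next => /rotI /revI.
have tri d : (order (face_next rev rot) d = 3)%N ->
    ((dl d).1 + (dl (face_next rev rot d)).1 + (dl (face_next rev rot (face_next rev rot d))).1 = 0) /\
    ((dl d).2 + (dl (face_next rev rot d)).2 + (dl (face_next rev rot (face_next rev rot d))).2 = 0).
  move=> H3.
  have e3 : face_next rev rot (face_next rev rot (face_next rev rot d)) = d.
    by have := iter_order fnI d; rewrite H3.
  have t1 : tail (face_next rev rot d) = tail (rev d) by rewrite /face_next tail_rot.
  have t2 : tail (face_next rev rot (face_next rev rot d)) = tail (rev (face_next rev rot d)).
    by rewrite /face_next tail_rot.
  have t3 : tail (rev (face_next rev rot (face_next rev rot d))) = tail d.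
    by rewrite -{2}e3 {2}/face_next tail_rot.
  have := hne (face_next rev rot d); have := cne (face_next rev rot d).
  have := hne (face_next rev rot (face_next rev rot d)).
  have := cne (face_next rev rot (face_next rev rot d)).
  rewrite /dl t3 t2 t1 => c3 h3 c2 h2.
  by apply: Dl_tri => //; apply: (hne d) || apply: (cne d).
pose g1 d : rat := ((dl d).1)%:~R.
pose g2 d : rat := ((dl d).2)%:~R.
have [p1 Hp1] : exists p : V -> rat, forall d, g1 d = p (tail (rev d)) - p (tail d).
  apply: (core revK revP rotI tail_rot rot_tr conn x0 euler).
    by move=> d; rewrite /g1 dlrev /= intrN.
  apply: (all_faces revK rotI) => // [d|x Hx].
    by rewrite /g1 dlrev /= intrN.
  by rewrite /g1 -!intrD (tri _ Hx).1.
have [p2 Hp2] : exists p : V -> rat, forall d, g2 d = p (tail (rev d)) - p (tail d).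
  apply: (core revK revP rotI tail_rot rot_tr conn x0 euler).
    by move=> d; rewrite /g2 dlrev /= intrN.
  apply: (all_faces revK rotI) => // [d|x Hx].
    by rewrite /g2 dlrev /= intrN.
  by rewrite /g2 -!intrD (tri _ Hx).2.
pose v0 := tail x0.
pose b := crt (hue v0) (color v0).
have csym : connect_sym (adj tail rev).
  apply: sym_connect_sym => u v; apply/existsP/existsP => [] [d /andP [/eqP h1 /eqP h2]];
    by exists (rev d); rewrite revK h1 h2 !eqxx.
have isint (p : V -> rat) (Hp : forall d, exists z : int, p (tail (rev d)) - p (tail d) = z%:~R) v :
    (p v - p v0) \is a Num.int.
  pose P := [pred w | (p w - p v0) \is a Num.int].
  have cl : closed (adj tail rev) P.
    move=> u w /existsP [d /andP [/eqP du /eqP dw]].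
    have [z Hz] := Hp d; rewrite !inE.
    have -> : p w - p v0 = (p u - p v0) + z%:~R.
      by rewrite -Hz -du -dw [RHS]addrC addrA subrK.
    by rewrite (rpredDr _ (intr_int _ z)).
  have := closed_connect cl (conn v0 v).
  by rewrite !inE subrr rpred0 => <-.
have nq (p : V -> rat) (Hp : forall d, exists z : int, p (tail (rev d)) - p (tail d) = z%:~R) v :
    (numq (p v - p v0))%:~R = p v - p v0.
  by have /intrP [m ->] := isint p Hp v; rewrite numq_int.
have Hp1' d : exists z : int, p1 (tail (rev d)) - p1 (tail d) = z%:~R by exists (dl d).1; rewrite -Hp1.
have Hp2' d : exists z : int, p2 (tail (rev d)) - p2 (tail d) = z%:~R by exists (dl d).2; rewrite -Hp2.
pose f v := (b.1 + numq (p1 v - p1 v0), b.2 + numq (p2 v - p2 v0)).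
have fd1 d : (f (tail (rev d))).1 = (f (tail d)).1 + (dl d).1.
  apply: (@intr_inj rat); rewrite /= !intrD (nq _ Hp1') (nq _ Hp1') -/(g1 d) Hp1; ring.
have fd2 d : (f (tail (rev d))).2 = (f (tail d)).2 + (dl d).2.
  apply: (@intr_inj rat); rewrite /= !intrD (nq _ Hp2') (nq _ Hp2') -/(g2 d) Hp2; ring.
pose P := [pred v | [&& hueT (f v) == hue v, ((f v).1%:~R == (color v).1 :> 'Z_2)
                       & ((f v).2%:~R == (color v).2 :> 'Z_2)]].
have cl : closed (adj tail rev) P.
  move=> u w /existsP [d /andP [/eqP du /eqP dw]].
  have [_ _ Hh Hc1 Hc2] := Dl_prop (hne d) (cne d).
  have eh : hueT (f w) = hueT (f u) + (hue w - hue u).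
    by rewrite /hueT -du -dw fd1 fd2 -Hh -intrD addrACA.
  have ec1 : ((f w).1%:~R : 'Z_2) = (f u).1%:~R + ((color w).1 - (color u).1).
    by rewrite -du -dw fd1 intrD Hc1.
  have ec2 : ((f w).2%:~R : 'Z_2) = (f u).2%:~R + ((color w).2 - (color u).2).
    by rewrite -du -dw fd2 intrD Hc2.
  by rewrite !inE eh ec1 ec2 !shift_eq.
have Pv v : P v.
  have := closed_connect cl (conn v0 v).
  rewrite [v0 \in P]inE.
  have -> : f v0 = b.
    by rewrite /f !subrr (_ : numq 0 = 0) // !addr0; case: (b).
  have [Hh Hc] := crt_spec (hue v0) (color v0).
  rewrite -/b Hh -Hc /colorT /= !eqxx /= => H.
  by have : v \in P by rewrite -H.
exists f; split.
- move=> u w /existsP [d /andP [/eqP du /eqP dw]].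
  have [_ Hl _ _ _] := Dl_prop (hne d) (cne d).
  rewrite /adjT -du -dw fd1 fd2 -/(dl d).
  by rewrite ![(f (tail d)).1 + _]addrC ![(f (tail d)).2 + _]addrC !addrK -[(dl d).1]subr0 -[(dl d).2]subr0.
- by move=> v; have := Pv v; rewrite inE => /and3P [/eqP -> _ _].
- move=> v; have := Pv v; rewrite inE => /and3P [_ /eqP H1 /eqP H2].
  by rewrite /colorT H1 H2; case: (color v).
Qed.
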